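(* For every integer $n\ge2$, \[ \log g(n)\le \theta\big(P^{+}(g(n))\big)+S(q), \] where $q$ is the prime following $P^{+}(g(n))$ and $S(q)=\sum_{2\le\alpha\le \log(2q)/\log2}\theta(q^{1/\alpha}+1)$ (sum over integers $\alpha$).
   Context: $g(n)$ is the maximal order of an element of $\mathfrak S_n$, i.e. $g(n)=\max\{M\ge1:\ell(M)\le n\}$ with $\ell$ additive, $\ell(1)=0$, $\ell(p^a)=p^a$; $P^{+}(M)$ is the largest prime factor of $M$. $\theta(x)=\sum_{p\le x}\log p$. *)

(* Defs.v *)
From Stdlib Require Import Reals.
From mathcomp Require Import all_boot.
Set Implicit Arguments. Unset Strict Implicit. Unset Printing Implicit Defensive.

Definition ell (M : nat) : nat := \sum_(p <- primes M) p ^ logn p M.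

Definition is_g (n M : nat) : Prop :=
  (1 <= M)%N /\ (ell M <= n)%N /\
  forall M' : nat, (1 <= M')%N -> (ell M' <= n)%N -> (M' <= M)%N.

Definition Pmaxf (M : nat) : nat := max_pdiv M.

Definition next_prime (p q : nat) : Prop :=
  prime q /\ (p < q)%N /\ forall r : nat, (p < r)%N -> (r < q)%N -> ~~ prime r.

(* For integers k >= 0 and real x: (k <= x) <-> (k < up x).  *)
Definition theta (x : R) : R :=
  \big[Rplus/R0]_(0 <= p < Z.to_nat (up x) | prime p) ln (INR p).

Definition Ssum (q : nat) : R :=
  \big[Rplus/R0]_(2 <= a < Z.to_nat (up (Rdiv (ln (Rmult 2 (INR q))) (ln 2))))
     theta (Rplus (Rpower (INR q) (Rinv (INR a))) 1).

(* Main.v *)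
From HB Require Import structures.
Require Import Defs.
From Stdlib Require Import Reals Lia Lra.
From mathcomp Require Import all_boot zify.

HB.instance Definition _ := Monoid.isComLaw.Build R R0 Rplus (fun a b c => esym (Rplus_assoc a b c)) Rplus_comm Rplus_0_l.

Definition Fm (M r : nat) : nat := if r %| M then r ^ logn r M else 0.

Lemma primes_range M B : 0 < M -> M < B ->
  primes M = [seq r <- index_iota 0 B | prime r && (r %| M)].
Proof.
move=> M0 MB; apply: (irr_sorted_eq ltn_trans ltnn).
- exact: sorted_primes.
- apply: sorted_filter; first exact: ltn_trans.
  exact: iota_ltn_sorted.
move=> r; rewrite mem_primes mem_filter mem_index_iota M0 /=.
case: (prime r) => //=; case Hd: (r %| M) => //=.
have := @dvdn_leq r M M0 Hd; lia.
Qed.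

Lemma ellE M B : 0 < M -> M < B ->
  ell M = \sum_(0 <= r < B | prime r) Fm M r.
Proof.
move=> M0 MB; rewrite /ell (@primes_range M B M0 MB) big_filter big_mkcondr.
by apply: eq_bigr => r _; rewrite /Fm.
Qed.

Lemma ellM x y : 0 < x -> 0 < y -> coprime x y -> ell (x * y) = ell x + ell y.
Proof.
move=> x0 y0 cxy.
have xy0 : 0 < x * y by rewrite muln_gt0 x0.
have hx : x < (x * y).+1 by rewrite ltnS leq_pmulr.
have hy : y < (x * y).+1 by rewrite ltnS leq_pmull.
rewrite (ellE _ _ xy0 (ltnSn _)) (ellE _ _ x0 hx) (ellE _ _ y0 hy) -big_split /=.
apply: eq_bigr => r pr; rewrite /Fm Euclid_dvdM // lognM //.
case Hx: (r %| x); case Hy: (r %| y) => //=.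
- have : r %| gcdn x y by rewrite dvdn_gcd Hx Hy.
  rewrite (eqP cxy) dvdn1 => /eqP r1; by rewrite r1 in pr.
- have : logn r y = 0 by apply/eqP; rewrite -leqn0 leqNgt logn_gt0 mem_primes Hy !andbF.
  by move=> ->; rewrite ?addn0 ?add0n.
- have : logn r x = 0 by apply/eqP; rewrite -leqn0 leqNgt logn_gt0 mem_primes Hx !andbF.
  by move=> ->; rewrite ?addn0 ?add0n.
Qed.

Lemma ellX p k : prime p -> 0 < k -> ell (p ^ k) = p ^ k.
Proof.
move=> pp k0; rewrite /ell primesX // primes_prime // big_seq1 pfactorK //.
Qed.
Lemma le_big_seq (s : seq nat) (P : pred nat) (F G : nat -> R) :
  (forall i, i \in s -> P i -> Rle (F i) (G i)) ->
  Rle (\big[Rplus/R0]_(i <- s | P i) F i) (\big[Rplus/R0]_(i <- s | P i) G i).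
Proof.
move=> H; rewrite big_seq_cond [X in Rle _ X]big_seq_cond.
apply: (big_ind2 (fun a b => Rle a b)); first lra.
  by move=> *; lra.
by move=> i /andP [H1 H2]; apply: H.
Qed.

Lemma big_nonneg (s : seq nat) (P : pred nat) (F : nat -> R) :
  (forall i, P i -> Rle 0 (F i)) -> Rle 0 (\big[Rplus/R0]_(i <- s | P i) F i).
Proof.
move=> H; apply: (big_ind (fun a => Rle 0 a)); first lra.
  by move=> *; lra.
exact: H.
Qed.

Lemma sub_big (s : seq nat) N (f : nat -> R) :
  uniq s -> (forall r, r \in s -> prime r && (r < N)) -> (forall r, prime r -> Rle 0 (f r)) ->
  Rle (\big[Rplus/R0]_(r <- s) f r) (\big[Rplus/R0]_(0 <= r < N | prime r) f r).
Proof.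
move=> us Hs f0; rewrite [X in Rle _ X](bigID (fun r => r \in s)) /=.
idtac; match goal with |- Rle _ (Rplus ?X _) => have -> : X = \big[Rplus/R0]_(r <- s) f r end.
  rewrite -big_filter; apply: perm_big; apply: uniq_perm => //.
    by apply: filter_uniq; exact: iota_uniq.
  move=> r; rewrite mem_filter mem_index_iota.
  case Hr: (r \in s); last by rewrite andbF.
  by have /andP [-> ?] := Hs r Hr; rewrite /=; lia.
match goal with |- Rle _ (Rplus _ ?Y) => have : Rle 0 Y by apply: big_nonneg => i /andP [pi _]; exact: f0 end.
lra.
Qed.

Lemma ln_prod (s : seq nat) (h : nat -> nat) : (forall r, 0 < h r) ->
  ln (INR (\prod_(r <- s) h r)) = \big[Rplus/R0]_(r <- s) ln (INR (h r)).
Proof.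
move=> hp; elim: s => [|a s IH]; first by rewrite !big_nil /= ln_1.
rewrite !big_cons -IH mult_INR ln_mult //.
- by apply: lt_0_INR; apply/ltP.
- apply: lt_0_INR; apply/ltP; elim: s {IH} => [|b s IH]; first by rewrite big_nil.
  by rewrite big_cons muln_gt0 hp.
Qed.

Lemma sum_ind k A (c : R) : 1 <= k -> (k == 1) || (k < A) ->
  \big[Rplus/R0]_(2 <= a < A) (if a <= k then c else R0) = Rmult (INR (k - 1)) c.
Proof.
move=> k1 /orP [/eqP -> | kA].
  rewrite big1_seq /=; first lra.
  by move=> a /=; rewrite mem_index_iota; case: ifP => // *; lia.
rewrite (@big_cat_nat _ _ _ k.+1) /=; [|lia|lia].
rewrite [X in Rplus _ X]big1_seq; last first.
  by move=> a /=; rewrite mem_index_iota; case: ifP => // *; lia.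
rewrite Rplus_0_r.
have -> : \big[Rplus/R0]_(2 <= a < k.+1) (if a <= k then c else R0) =
          \big[Rplus/R0]_(2 <= a < k.+1) c.
  by rewrite big_seq [RHS]big_seq; apply: eq_bigr => a; rewrite mem_index_iota; case: ifP => //; lia.
elim: k k1 {kA} => [|k IH] //= k1.
case: (ltnP 1 k) => hk.
  rewrite big_nat_recr /=; last lia.
  rewrite IH; last lia.
  have -> : k.+1 - 1 = (k - 1).+1 by lia.
  rewrite S_INR; lra.
case: k {IH} hk k1 => [|[|k]] // _ _.
  by rewrite big_geq //=; lra.
rewrite big_nat_recr //= big_geq //=; lra.
Qed.
Lemma INR_expn x n : INR (x ^ n) = pow (INR x) n.
Proof. elim: n => [|n IH]; first by rewrite expn0. by rewrite expnS mult_INR IH. Qed.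

Lemma up_nat k : Z.to_nat (up (INR k)) = k.+1.
Proof.
rewrite INR_IZR_INZ -(tech_up _ (Z.of_nat k + 1)); [lia | rewrite plus_IZR; lra | rewrite plus_IZR; lra].
Qed.

Lemma lt_up r x : Rle (INR r) x -> r < Z.to_nat (up x).
Proof.
move=> H; have [h _] := archimed x.
have : (Z.of_nat r < up x)%Z by apply: lt_IZR; rewrite -INR_IZR_INZ; lra.
lia.
Qed.

Lemma root_bound r a q : 0 < a -> 1 <= r -> (r - 1) ^ a <= q ->
  Rle (INR r) (Rplus (Rpower (INR q) (Rinv (INR a))) 1).
Proof.
move=> a0 r1 H.
have Er : INR r = Rplus (INR (r - 1)) 1 by rewrite -S_INR; congr INR; lia.
have Rp : Rlt 0 (Rpower (INR q) (Rinv (INR a))) by rewrite /Rpower; apply: exp_pos.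
case: (ltnP 1 r) => hr; last first.
  rewrite Er; have -> : r - 1 = 0 by lia.
  rewrite /=; lra.
have p1 : Rlt 0 (INR (r - 1)) by apply: lt_0_INR; apply/ltP; lia.
have a0' : INR a <> R0 by apply: not_0_INR; lia.
suff : Rle (INR (r - 1)) (Rpower (INR q) (Rinv (INR a))) by lra.
have -> : INR (r - 1) = Rpower (pow (INR (r - 1)) a) (Rinv (INR a)).
  by rewrite -Rpower_pow // Rpower_mult Rinv_r // Rpower_1.
apply: Rle_Rpower_l.
  by apply: Rlt_le; apply: Rinv_0_lt_compat; apply: lt_0_INR; apply/ltP; lia.
split; first by apply: pow_lt.
by rewrite -INR_expn; apply: le_INR; apply/leP.
Qed.

Lemma ln_le x y : Rlt 0 x -> Rle x y -> Rle (ln x) (ln y).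
Proof.
move=> x0 [xy|<-]; last by apply: Rle_refl.
by apply: Rlt_le; apply: ln_increasing.
Qed.

Lemma ln_nonneg_prime r : prime r -> Rle 0 (ln (INR r)).
Proof.
move=> pr; rewrite -ln_1; apply: ln_le; first lra.
have : (1 <= r)%coq_nat by apply/leP; exact: prime_gt0.
by move/le_INR.
Qed.

Lemma theta_nonneg x : Rle 0 (theta x).
Proof. by apply: big_nonneg => i; exact: ln_nonneg_prime. Qed.

Lemma Ssum_nonneg q : Rle 0 (Ssum q).
Proof. by apply: big_nonneg => i _; exact: theta_nonneg. Qed.

Theorem mainTheorem17 (n M q : nat) :
  (2 <= n)%N -> is_g n M -> next_prime (Pmaxf M) q ->
  Rle (ln (INR M)) (Rplus (theta (INR (Pmaxf M))) (Ssum q)).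
Proof.
move=> n2 [M1 [ellMn Mmax]] [qp [Pq Hq]].
have th0 := theta_nonneg (INR (Pmaxf M)).
have S0 := Ssum_nonneg q.
case: (ltnP 1 M) => hM; last first.
  have -> : M = 1 by lia.
  rewrite /= ln_1; apply: Rplus_le_le_0_compat; [exact: theta_nonneg | exact: Ssum_nonneg].
set P := Pmaxf M in Pq *.
have pP : prime P by exact: max_pdiv_prime.
have leMax : forall r, r \in primes M -> r <= P by move=> r rT; exact: max_pdiv_max.
have M0 : 0 < M by lia.
have P2 : 2 <= P by exact: prime_gt1.
have qndvd : ~~ (q %| M).
  apply/negP => qM; have : q \in primes M by rewrite mem_primes qp M0.
  by move/leMax; lia.
have exch : forall r, r \in primes M -> 2 <= logn r M ->
    r ^ (logn r M - 1) * (r - 1) < q.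
  move=> r rT k2; rewrite ltnNge; apply/negP => Hle.
  have pr : prime r by move: rT; rewrite mem_primes => /andP [].
  have r2 : 2 <= r by exact: prime_gt1.
  have rq : r < q by have := leMax r rT; lia.
  have [m cm EM] := pfactor_coprime pr M0.
  move: Hle EM k2; set k := logn r M => Hle EM k2.
  have m0 : 0 < m by move: M0; rewrite EM muln_gt0 => /andP [].
  have t0 : 0 < r ^ (k - 1) by rewrite expn_gt0 (leq_trans _ r2).
  have Ek : r ^ k = r ^ (k - 1) * r by rewrite -expnSr; congr (_ ^ _); lia.
  have cqm : coprime q m.
    rewrite prime_coprime //; apply/negP => qm; move/negP: qndvd; apply.
    by rewrite EM dvdn_mulr.
  have cqr : coprime q r.
    rewrite prime_coprime //; apply/negP => /(dvdn_leq (prime_gt0 pr)); lia.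
  have ellM_ : ell M = ell m + r ^ k.
    rewrite {1}EM ellM //; last by apply: coprimeXr; rewrite coprime_sym.
      by rewrite ellX //; lia.
    by rewrite expn_gt0 (leq_trans _ r2).
  have ellM' : ell (m * q * r ^ (k - 1)) = ell m + q + r ^ (k - 1).
    rewrite ellM //; last first.
      by rewrite coprimeMl; apply/andP; split; apply: coprimeXr; rewrite // coprime_sym.
      by rewrite muln_gt0 m0 prime_gt0.
    have eq1 : ell q = q by have := ellX _ _ qp (isT : 0 < 1); rewrite expn1.
    have eq2 : ell (r ^ (k - 1)) = r ^ (k - 1) by apply: ellX => //; lia.
    rewrite ellM ?(prime_gt0 qp) 1?coprime_sym //; by rewrite eq1 eq2.
  have Mle := Mmax (m * q * r ^ (k - 1)).
  have H1 : 1 <= m * q * r ^ (k - 1) by rewrite !muln_gt0 m0 prime_gt0 ?t0.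
  have H2 : ell (m * q * r ^ (k - 1)) <= n.
    rewrite ellM'.
    have : r ^ (k - 1) * (r - 1) + r ^ (k - 1) = r ^ k by rewrite Ek mulnBr muln1 subnK // leq_pmulr // (leq_trans _ r2).
    lia.
  have := Mle H1 H2; rewrite EM Ek.
  set t := r ^ (k - 1) in t0 *.
  nia.
have Mprod : M = \prod_(r <- primes M) r ^ logn r M.
  by rewrite {1}(prod_prime_decomp M0) prime_decompE big_map.
have hpos : forall r, 0 < r ^ logn r M by case=> [|r] //; rewrite expn_gt0.
have primeT : forall r, r \in primes M -> prime r.
  by move=> r; rewrite mem_primes => /andP [].
have INRp : forall r, prime r -> Rlt 0 (INR r).
  by move=> r pr; apply: lt_0_INR; apply/ltP; exact: prime_gt0.
have lnM : ln (INR M) = \big[Rplus/R0]_(r <- primes M) Rmult (INR (logn r M)) (ln (INR r)).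
  rewrite {1}Mprod ln_prod // big_seq [RHS]big_seq; apply: eq_bigr => r rT.
  by rewrite INR_expn ln_pow //; apply: INRp; apply: primeT.
have ln2 : Rlt 0 (ln 2) by rewrite -ln_1; apply: ln_increasing; lra.
have I2 : INR 2 = IZR 2%Z by rewrite /=; lra.
have kA : forall r, r \in primes M -> 2 <= logn r M ->
    logn r M < Z.to_nat (up (Rdiv (ln (Rmult 2 (INR q))) (ln 2))).
  move=> r rT k2; apply: lt_up; have := exch r rT k2.
  move: k2; set k := logn r M => k2 hq.
  have r2 : 2 <= r by apply: prime_gt1; apply: primeT.
  have h1 : 2 ^ (k - 1) <= r ^ (k - 1) by rewrite leq_exp2r //; lia.
  have h2 : r ^ (k - 1) <= r ^ (k - 1) * (r - 1) by rewrite leq_pmulr //; lia.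
  have h3 : 2 ^ k = 2 * 2 ^ (k - 1) by rewrite -expnS; congr (_ ^ _); lia.
  have h4 : 2 ^ k <= 2 * q by lia.
  have : Rle (ln (INR (2 ^ k))) (ln (INR (2 * q))).
    apply: ln_le; first by apply: lt_0_INR; apply/ltP; rewrite expn_gt0.
    by apply: le_INR; apply/leP.
  rewrite INR_expn mult_INR I2 ln_pow; last lra.
  move=> H; rewrite /Rdiv; apply: (Rmult_le_reg_r (ln 2)) => //.
  rewrite Rmult_assoc Rinv_l ?Rmult_1_r //; lra.
rewrite lnM.
have -> : \big[Rplus/R0]_(r <- primes M) Rmult (INR (logn r M)) (ln (INR r)) =
   \big[Rplus/R0]_(r <- primes M) Rplus (ln (INR r))
      (\big[Rplus/R0]_(2 <= a < Z.to_nat (up (Rdiv (ln (Rmult 2 (INR q))) (ln 2))))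
          (if a <= logn r M then ln (INR r) else R0)).
  rewrite big_seq [RHS]big_seq; apply: eq_bigr => r rT.
  have k1 : 1 <= logn r M by rewrite logn_gt0.
  rewrite sum_ind //; last first.
    case: (ltnP 1 (logn r M)) => hk; last by apply/orP; left; apply/eqP; lia.
    by apply/orP; right; apply: kA.
  have -> : logn r M = (logn r M - 1).+1 by lia.
  rewrite S_INR; have -> : (logn r M - 1).+1 - 1 = logn r M - 1 by lia.
  lra.
rewrite big_split /= exchange_big /=.
apply: Rplus_le_compat.
  rewrite /theta up_nat; apply: sub_big.
  - exact: primes_uniq.
  - move=> r rT; rewrite primeT //=; have := leMax r rT; lia.
  - exact: ln_nonneg_prime.
rewrite /Ssum; apply: le_big_seq => a aI _.
rewrite -big_mkcond -big_filter; apply: sub_big.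
- by apply: filter_uniq; exact: primes_uniq.
- move=> r; rewrite mem_filter => /andP [ak rT].
  have a2 : 2 <= a by move: aI; rewrite mem_index_iota; lia.
  rewrite primeT //=; apply: lt_up; apply: root_bound; first lia.
    by have := prime_gt0 (primeT r rT).
  have k2 : 2 <= logn r M by lia.
  have := exch r rT k2.
  move: k2 ak; set k := logn r M => k2 ak hq.
  have r2 : 2 <= r by apply: prime_gt1; apply: primeT.
  have h1 : (r - 1) ^ a <= (r - 1) ^ k by apply: leq_pexp2l; lia.
  have h2 : (r - 1) ^ k = (r - 1) ^ (k - 1) * (r - 1) by rewrite -expnSr; congr (_ ^ _); lia.
  have h3 : (r - 1) ^ (k - 1) <= r ^ (k - 1) by rewrite leq_exp2r //; lia.
  have h4 : (r - 1) ^ (k - 1) * (r - 1) <= r ^ (k - 1) * (r - 1) by rewrite leq_mul2r h3 orbT.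
  lia.
- exact: ln_nonneg_prime.
Qed.
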